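(* For every integer $k\ge1$ and variables $x_1,\dots,x_k$, from the axioms $\{0\le x_i\le1\}_{i\in[k]}$ there is a degree-$2k$ sum-of-squares derivation of $$\prod_{i=1}^kx_i-\Big(\prod_{i=1}^kx_i\Big)^2\le\sum_{i=1}^k(x_i-x_i^2).$$
   Context: A degree-$d$ sum-of-squares derivation of $p\le q$ from axioms $\{g_j\ge0\}$ means $q-p=s+\sum_t r_tG_t$ with $s,r_t$ sums of squares, each $G_t$ a product of axiom polynomials $g_j$, and all terms of degree at most $d$. *)

(* Defs.v *)
From HB Require Import structures.
From mathcomp Require Import all_boot all_order all_algebra.
From mathcomp Require Import mpoly.
Set Implicit Arguments. Unset Strict Implicit. Unset Printing Implicit Defensive.
Import Order.TTheory GRing.Theory Num.Theory.
Local Open Scope ring_scope.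

(* total degree at most d  (msize p = 1 + total degree, 0 for p = 0) *)
Definition deg_le (n : nat) (R : nzRingType) (p : {mpoly R[n]}) (d : nat) : Prop :=
  (msize p <= d.+1)%N.

Definition is_sos (n : nat) (R : nzRingType) (p : {mpoly R[n]}) : Prop :=
  exists s : seq {mpoly R[n]}, p = \sum_(q <- s) q ^+ 2.

(* A degree-d sum-of-squares derivation of p <= q from the axioms
   {g >= 0 | g \in A}:  q - p = s + \sum_t r_t G_t, where s and each r_t are
   sums of squares, each G_t is a product of axiom polynomials (a finite
   multiset, given as a sequence of elements of A), and s and each r_t G_t
   have degree at most d. *)
Definition sos_derivation (n : nat) (R : nzRingType) (A : seq {mpoly R[n]})
    (d : nat) (p q : {mpoly R[n]}) : Prop :=
  exists (s : {mpoly R[n]}) (terms : seq ({mpoly R[n]} * seq {mpoly R[n]})),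
    [/\ q - p = s + \sum_(t <- terms) t.1 * \prod_(g <- t.2) g,
        is_sos s, deg_le s d &
        forall t, t \in terms ->
          [/\ is_sos t.1, all (fun g => g \in A) t.2 &
              deg_le (t.1 * \prod_(g <- t.2) g) d]].

Definition box_axioms (k : nat) (R : nzRingType) : seq {mpoly R[k]} :=
  [seq 'X_i | i <- enum 'I_k] ++ [seq 1 - 'X_i | i <- enum 'I_k].

(* Main.v *)
Require Import Defs.
From HB Require Import structures.
From mathcomp Require Import all_boot all_order all_algebra.
From mathcomp Require Import mpoly.
From mathcomp Require Import ring.
From mathcomp Require Import zify.
Import Order.TTheory GRing.Theory Num.Theory.
Local Open Scope ring_scope.

Definition isax {R : comNzRingType} (xs : seq R) (g : R) := has (fun x => (g == x) || (g == 1 - x)) xs.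

Fixpoint tele {R : comNzRingType} (ys : seq R) : seq (seq R) :=
  match ys with
  | [::] => [::]
  | y :: ys' => @cons (seq R) (@cons R (1 - y) [::]) (map (@cons R y) (tele ys'))
  end.

Lemma prod_cons (R : comNzRingType) (x : R) (s : seq R) : \prod_(g <- x :: s) g = x * \prod_(g <- s) g.
Proof. by rewrite big_cons. Qed.

Lemma tele_cons (R : comNzRingType) (y : R) ys : tele (y :: ys) = [:: 1 - y] :: map (cons y) (tele ys).
Proof. by []. Qed.

Lemma tele_sum (R : comNzRingType) (ys : seq R) : 1 - \prod_(y <- ys) y = \sum_(t <- tele ys) \prod_(g <- t) g.
Proof.
elim: ys => [|y ys IH]; first by rewrite big_nil [tele _]/= big_nil subrr.
rewrite tele_cons big_cons big_cons big_map big_seq1.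
rewrite (eq_bigr (fun j => y * \prod_(g <- j) g)); last by move=> j _; exact: prod_cons.
by rewrite -mulr_sumr -IH mulrBr mulr1 addrA subrK.
Qed.

Arguments isax : simpl never.

Lemma isax_cons (R : comNzRingType) (a : R) ys g : isax ys g -> isax (a :: ys) g.
Proof. by rewrite /isax /= => ->; rewrite orbT. Qed.

Lemma tele_prop (R : comNzRingType) (ys : seq R) t : t \in tele ys -> (size t <= size ys)%N /\ all (isax ys) t.
Proof.
elim: ys t => [|y ys IH] t //=; rewrite inE => /orP [/eqP -> /=|].
  by rewrite /isax /= eqxx orbT.
case/mapP => u /IH [Hs Ha] ->; split => //=.
rewrite /isax /= eqxx /=; apply/allP => g /(allP Ha) Hg.
exact: isax_cons.
Qed.


Lemma nat1 (u y : nat) : (u <= y)%N -> ((u.+1).+1 <= 2 * y.+1)%N.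
Proof. lia. Qed.
Lemma nat2 (u y : nat) : (u <= y)%N -> ((y + u).+1 <= 2 * y.+1)%N.
Proof. lia. Qed.
Lemma nat3 (u y : nat) : (u <= y)%N -> ((y + u).+2 <= 2 * y.+1)%N.
Proof. lia. Qed.

Lemma main_alg (R : comNzRingType) (xs : seq R) : exists c : seq (seq R),
  \sum_(x <- xs) (x - x ^+ 2) - (\prod_(x <- xs) x - (\prod_(x <- xs) x) ^+ 2)
    = \sum_(t <- c) \prod_(g <- t) g /\
  (forall t, t \in c -> (size t <= 2 * size xs)%N /\ all (isax xs) t).
Proof.
elim: xs => [|a ys [c [Hc Hp]]].
  by exists [::]; rewrite !big_nil expr1n !subrr.
set T := tele ys.
exists (c ++ (map (fun t => (1 - a) :: a :: t) T ++ map (fun t => (1 - a) :: (ys ++ t)) T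
              ++ map (fun t => (1 - a) :: a :: (ys ++ t)) T)); split.
  rewrite !big_cat /=. rewrite !big_map -Hc.
  set b := \prod_(y <- ys) y.
  have S : forall (l : seq R),
      \sum_(t <- T) \prod_(g <- (1 - a) :: (l ++ t)) g = (1 - a) * \prod_(g <- l) g * (1 - b).
    move=> l; rewrite tele_sum mulr_sumr; apply: eq_bigr => t _.
    by rewrite big_cons big_cat mulrA.
  have S1 := S [:: a]; have S2 := S ys; have S3 := S (a :: ys).
  rewrite /= in S1 S3; rewrite S1 S2 S3.
  rewrite !big_cons big_nil mulr1 -/b.
  ring.
have Hys : all (isax (a :: ys)) ys.
  apply/allP => x xin; apply: isax_cons; apply/hasP; exists x => //; by rewrite eqxx.
have H1 : isax (a :: ys) (1 - a) by rewrite /isax /= eqxx orbT.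
have H2 : isax (a :: ys) a by rewrite /isax /= eqxx.
have Hsub : forall u, all (isax ys) u -> all (isax (a :: ys)) u.
  move=> u; apply: sub_all => g; exact: isax_cons.
move=> t; rewrite !mem_cat => /orP [/Hp [Hs Ha]|/orP [|/orP []]] /=.
- by split; [rewrite mulnS; apply: (leq_trans Hs); apply: leq_addl | exact: Hsub].
- case/mapP => u /tele_prop [Hs Ha] -> /=. rewrite H1 H2 Hsub //; split => //.
  exact: nat1.
- case/mapP => u /tele_prop [Hs Ha] -> /=; rewrite H1 all_cat Hys Hsub //; split => //.
  rewrite size_cat; exact: nat2.
- case/mapP => u /tele_prop [Hs Ha] -> /=; rewrite H1 H2 all_cat Hys Hsub //; split => //.
  rewrite size_cat; exact: nat3.
Qed.

Lemma msizeM_le2 (R : realFieldType) (k : nat) (p q : {mpoly R[k]}) :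
  (msize (p * q) <= (msize p + msize q).-1)%N.
Proof.
have [->|nzp] := eqVneq p 0; first by rewrite mul0r msize0.
have [->|nzq] := eqVneq q 0; first by rewrite mulr0 msize0.
by rewrite msizeM.
Qed.

Lemma msize_prod_le (R : realFieldType) (k : nat) (gs : seq {mpoly R[k]}) :
  all (fun g => (msize g <= 2)%N) gs -> (msize (\prod_(g <- gs) g) <= (size gs).+1)%N.
Proof.
elim: gs => [|g gs IH]; first by rewrite big_nil msize1.
rewrite /= big_cons => /andP [Hg Hgs].
apply: (leq_trans (@msizeM_le2 _ _ g _)).
have := IH Hgs; move: Hg; set m := msize _; set m' := msize _; lia.
Qed.

Lemma msize_ax (R : realFieldType) (k : nat) (g : {mpoly R[k]}) :
  g \in box_axioms k R -> (msize g <= 2)%N.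
Proof.
rewrite /box_axioms mem_cat => /orP [] /mapP [i _ ->].
  by rewrite msizeX mdeg1.
apply: (leq_trans (msizeD_le _ _)).
by rewrite msizeN msizeX mdeg1 msize1.
Qed.

Theorem claimB2 (R : realFieldType) (k : nat) (hk : (1 <= k)%N) :
  sos_derivation (box_axioms k R) (2 * k)
    ((\prod_(i < k) 'X_i) - (\prod_(i < k) 'X_i) ^+ 2)
    (\sum_(i < k) ('X_i - 'X_i ^+ 2) : {mpoly R[k]}).
Proof.
set xs := [seq ('X_i : {mpoly R[k]}) | i <- enum 'I_k].
have [c [Hc Hp]] := @main_alg _ xs.
have EP : \prod_(x <- xs) x = \prod_(i < k) ('X_i : {mpoly R[k]}).
  by rewrite big_map big_enum.
have ES : \sum_(x <- xs) (x - x ^+ 2) = \sum_(i < k) ('X_i - 'X_i ^+ 2 : {mpoly R[k]}).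
  by rewrite big_map big_enum.
have Hsz : size xs = k by rewrite size_map size_enum_ord.
rewrite EP ES in Hc.
exists 0, [seq (1, t) | t <- c]; split.
- by rewrite add0r big_map Hc; apply: eq_bigr => t _; rewrite mul1r.
- by exists [::]; rewrite big_nil.
- by rewrite /deg_le msize0.
move=> t /mapP [u /Hp [Hs Ha] ->] /=; split.
- by exists [:: 1]; rewrite big_seq1 expr1n.
- apply/allP => g /(allP Ha); rewrite /isax => /hasP [x /mapP [i _ ->]] /orP [] /eqP ->.
    by rewrite /box_axioms mem_cat; apply/orP; left; apply: map_f; rewrite mem_enum.
  by rewrite /box_axioms mem_cat; apply/orP; right; apply: (map_f (fun j => 1 - 'X_j)); rewrite mem_enum.
have Hall : all (fun g => (msize g <= 2)%N) u.
  apply/allP => g /(allP Ha); rewrite /isax => /hasP [x /mapP [i _ ->]] /orP [] /eqP -> ;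
  apply: msize_ax; rewrite /box_axioms mem_cat; apply/orP; [left; apply: map_f | right; apply: (map_f (fun j => 1 - 'X_j))]; by rewrite mem_enum.
rewrite /deg_le mul1r. have H := @msize_prod_le _ _ u Hall. apply: (leq_trans H).
by rewrite ltnS; move: Hs; rewrite Hsz.
Qed.
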